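(* Let $B$ be a connected building set on $V=[n]$ and let $\emptyset=I_0\subsetneq I_1\subsetneq\cdots\subsetneq I_k=V$ be a splitting chain of $B$. For $i\in V$ let $l(i)$ be the unique $j$ with $i\in I_j\setminus I_{j-1}$, and let $S_i$ be the largest (by inclusion) element of $B$ containing $i$ and contained in $I_{l(i)-1}\cup\{i\}$. Then $S_i=V$ for exactly one $i\in V$, the sets $S_i$ ($i\in V$) are pairwise distinct, and $N=\{S_i: i\in V\}\setminus\{V\}$ is a maximal (with respect to inclusion) nested set of $B$.
   Context: A building set on a finite set $V$ is a collection $B$ of nonempty subsets of $V$ such that $\{v\}\in B$ for all $v\in V$ and such that $I,J\in B$, $I\cap J\neq\emptyset$ imply $I\cup J\in B$. It is connected if $V\in B$, and discrete if it consists only of the singletons. For $I\subseteq V$, the restriction is $B|_I=\{J\in B: J\subseteq I\}$ and the contraction is $B/I=\{J\subseteq V\setminus I: J\neq\emptyset,\ J\in B\text{ or }J\cup I'\in B\text{ for some }I'\subseteq I\}$. A splitting chain of $B$ is a chain $\emptyset=I_0\subsetneq I_1\subsetneq\cdots\subsetneq I_k=V$ such that for every $1\le j\le k$ the building set $(B|_{I_j})/I_{j-1}$ on $I_j\setminus I_{j-1}$ is discrete. For a connected building set $B$ on $V$, a nested set is a subcollection $N\subseteq B\setminus\{V\}$ such that (N1) any two members of $N$ are either comparable by inclusion or disjoint, and (N2) the union of any $p\ge2$ pairwise disjoint members of $N$ does not belong to $B$. (Since $B$ is closed under unions of intersecting members, the largest element $S_i$ above exists.) *)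

(* Defs.v *)
(* Ground set V = [n] is modelled as the finite type 'I_n. *)
From mathcomp Require Import all_boot.
Set Implicit Arguments. Unset Strict Implicit. Unset Printing Implicit Defensive.

Section Building.
Variable T : finType.

Definition building_set_on (W : {set T}) (B : {set {set T}}) : Prop :=
  (forall I, I \in B -> (I != set0) /\ I \subset W) /\
  (forall v, v \in W -> [set v] \in B) /\
  (forall I J, I \in B -> J \in B -> I :&: J != set0 -> I :|: J \in B).

Definition building_set (B : {set {set T}}) : Prop := building_set_on [set: T] B.

Definition connected_bs (B : {set {set T}}) : Prop := [set: T] \in B.

Definition discrete_bs (B : {set {set T}}) : Prop := forall J, J \in B -> #|J| = 1.

Definition restr (B : {set {set T}}) (I : {set T}) : {set {set T}} :=
  [set J in B | J \subset I].

Definition contr (W : {set T}) (B : {set {set T}}) (I : {set T}) : {set {set T}} :=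
  [set J : {set T} | (J != set0) && (J \subset W :\: I) &&
     [exists I' : {set T}, (I' \subset I) && ((J \in B) || (J :|: I' \in B))]].

Definition splitting_chain (B : {set {set T}}) (k : nat) (I : nat -> {set T}) : Prop :=
  I 0 = set0 /\ I k = [set: T] /\
  (forall j, j < k -> I j \proper I j.+1) /\
  (forall j, 1 <= j <= k -> discrete_bs (contr (I j) (restr B (I j)) (I j.-1))).

Definition nested (B N : {set {set T}}) : Prop :=
  N \subset B :\ [set: T] /\
  (forall X Y, X \in N -> Y \in N -> [|| X \subset Y, Y \subset X | [disjoint X & Y]]) /\
  (forall P : {set {set T}}, P \subset N -> 2 <= #|P| ->
     (forall X Y, X \in P -> Y \in P -> X != Y -> [disjoint X & Y]) ->
     \bigcup_(X in P) X \notin B).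

Definition maximal_nested (B N : {set {set T}}) : Prop :=
  nested B N /\ (forall N', nested B N' -> N \subset N' -> N' = N).

End Building.

(* Main.v *)
Require Import Defs.
From mathcomp Require Import all_boot zify.

Theorem mainTheorem3 (n : nat) (B : {set {set 'I_n}})
  (k : nat) (I : nat -> {set 'I_n})
  (l : 'I_n -> nat) (S : 'I_n -> {set 'I_n}) :
  building_set B -> connected_bs B ->
  splitting_chain B k I ->
  (* l i is the unique j (1 <= j <= k) with i \in I_j \ I_(j-1) *)
  (forall i, 1 <= l i <= k /\ i \in I (l i) :\: I (l i).-1) ->
  (* S i is the largest element of B containing i, contained in I_(l i - 1) \cup {i} *)
  (forall i, [/\ S i \in B, i \in S i, S i \subset I (l i).-1 :|: [set i] &
     forall J, J \in B -> i \in J -> J \subset I (l i).-1 :|: [set i] -> J \subset S i]) ->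
  (exists! i, S i = [set: 'I_n]) /\
  injective S /\
  maximal_nested B ([set S i | i in [set: 'I_n]] :\ [set: 'I_n]).
Proof.
move=> [Bne [Bsing Bun]] BV [I0 [Ik [Iprop Idisc]]] Hl HS.
have Imono : forall j j', j <= j' <= k -> I j \subset I j'.
  move=> j j' /andP[]; elim: j' j => [|j' IH] j le jk.
    by move: le; rewrite leqn0 => /eqP->.
  case: (ltngtP j j'.+1) le => // [lt _|-> _]; last exact: subxx.
  apply: subset_trans (IH j lt (ltnW jk)) _; exact: proper_sub (Iprop j' jk).
have K1 : forall i j, j <= k -> i \in I j -> l i <= j.
  move=> i j jk iIj; rewrite leqNgt; apply/negP=> lt.
  have [/andP[l1 lk] /setDP[_ ni]] := Hl i.
  by case/negP: ni; apply: (subsetP (Imono j (l i).-1 _)) => //; apply/andP; split; lia.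
have Iil : forall i m, l i <= m <= k -> i \in I m.
  move=> i m H; have [_ /setDP[H1 _]] := Hl i; exact: (subsetP (Imono _ _ H)).
have K2 : forall C m x y, C \in B -> 1 <= m <= k -> C \subset I m ->
    x \in C -> y \in C -> x \notin I m.-1 -> y \notin I m.-1 -> x = y.
  move=> C m x y CB mk CI xC yC xn yn.
  have D := Idisc m mk (C :\: I m.-1).
  have : #|C :\: I m.-1| = 1.
    apply: D; rewrite inE; apply/andP; split; first (apply/andP; split).
    - by apply/set0Pn; exists x; rewrite inE xn.
    - by apply/subsetP=> z /setDP[zC zn]; rewrite inE zn (subsetP CI).
    apply/existsP; exists (C :&: I m.-1); rewrite subsetIr /=; apply/orP; right.
    by rewrite setUC setID inE CB CI.
  move/eqP/cards1P=> [z Hz].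
  have : x \in [set z] by rewrite -Hz inE xn.
  have : y \in [set z] by rewrite -Hz inE yn.
  by rewrite !inE => /eqP-> /eqP->.
have K3 : forall x j, x \in S j -> x = j \/ l x < l j.
  move=> x j xS; have [_ _ Ssub _] := HS j; have [/andP[l1 lk] _] := Hl j.
  move: (subsetP Ssub x xS); rewrite inE => /orP[xI|/set1P]; last by left.
  right; have := K1 x (l j).-1 (leq_trans (leq_pred _) lk) xI; lia.
have SiI : forall i, S i \subset I (l i).
  move=> i; apply/subsetP=> x xS; have [/andP[l1 lk] /setDP[iI _]] := Hl i.
  have [_ _ Ssub _] := HS i; move: (subsetP Ssub x xS); rewrite inE => /orP[xI|/set1P->] //.
  by apply: (subsetP (Imono _ _ _)) xI; apply/andP; split; lia.
have K4 : forall C, C \in B -> C != set0 -> exists2 t, t \in C & C \subset S t.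
  move=> C CB /set0Pn[x0 x0C].
  case: (@arg_maxnP _ x0 (mem C) l x0C) => t tC tmax.
  exists t => //; have [_ _ _ Smax] := HS t; apply: Smax => //.
  have [/andP[l1 lk] /setDP[_ tn]] := Hl t.
  have CI : C \subset I (l t).
    apply/subsetP=> x xC; apply: Iil; have := tmax x xC; have [/andP[? ?] _] := Hl x; lia.
  apply/subsetP=> x xC; rewrite inE; case: (boolP (x \in I (l t).-1)) => //= xn.
  by rewrite (K2 C (l t) x t CB) ?l1 ?lk ?inE.
have K5 : forall i j x, x \in S i -> x \in S j -> l i < l j -> S i \subset S j.
  move=> i j x xi xj lt.
  have [SiB ii _ _] := HS i; have [SjB jj Sjs Smax] := HS j.
  have UB : S i :|: S j \in B by apply: Bun => //; apply/set0Pn; exists x; rewrite inE xi xj.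
  apply: subset_trans (subsetUl _ (S j)) _; apply: Smax => //; first by rewrite inE jj orbT.
  rewrite subUset Sjs andbT; apply: subset_trans (SiI i) _.
  apply: subset_trans (subsetUl _ [set j]); apply: Imono.
  have [/andP[? ?] _] := Hl j; apply/andP; split; lia.
have K6 : forall i j x, x \in S i -> x \in S j -> l i = l j -> i = j.
  move=> i j x xi xj eq.
  have [SiB ii _ _] := HS i; have [SjB jj _ _] := HS j.
  have UB : S i :|: S j \in B by apply: Bun => //; apply/set0Pn; exists x; rewrite inE xi xj.
  have [lk /setDP[_ ni]] := Hl i; have [_ /setDP[_ nj]] := Hl j.
  apply: (K2 _ (l i) i j UB lk); rewrite ?inE ?ii ?jj ?orbT ?eq //.
    by rewrite subUset SiI -eq SiI.
  by rewrite -eq.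
have Ncomp : forall i j, [|| S i \subset S j, S j \subset S i | [disjoint S i & S j]].
  move=> i j; case: (boolP [disjoint S i & S j]) => [D|]; first by apply/or3P; constructor 3.
  rewrite -setI_eq0 => /set0Pn[x]; rewrite inE => /andP[xi xj].
  case: (ltngtP (l i) (l j)) => H.
  - by rewrite (K5 i j x).
  - by rewrite (K5 j i x) ?orbT.
  - by rewrite (K6 i j x) // subxx.
have uniq2 : forall i j, i \in S j -> j \in S i -> i = j.
  move=> i j ij ji; case: (K3 i j ij) => [//|h1]; case: (K3 j i ji) => [->//|h2]; lia.
have Vne : [set: 'I_n] != set0 by have [] := Bne _ BV.
have NP : forall X, reflect (X != [set: 'I_n] /\ exists i, X = S i)
    (X \in [set S i | i in [set: 'I_n]] :\ [set: 'I_n]).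
  move=> X; rewrite in_setD1; apply: (iffP andP) => [[XV /imsetP[i _ Xi]]|[XV [i Xi]]].
    by split => //; exists i.
  by split => //; apply/imsetP; exists i.
set N := [set S i | i in [set: 'I_n]] :\ [set: 'I_n].
have nestN : nested B N.
  split; [|split].
  - apply/subsetP => X /NP[XV [i Xi]]; have [SB _ _ _] := HS i.
    by rewrite in_setD1 XV /= Xi.
  - by move=> X Y /NP[_ [i ->]] /NP[_ [j ->]]; apply: Ncomp.
  move=> P PN P2 Pdis; apply/negP => UB.
  have [Z ZP] : exists Z, Z \in P.
    by apply/set0Pn; rewrite -card_gt0; apply: leq_trans P2.
  have Zsub : Z \subset \bigcup_(X in P) X by apply: bigcup_sup.
  have [_ [i0 Zi0]] := NP Z (subsetP PN Z ZP).
  have Une : \bigcup_(X in P) X != set0.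
    apply/set0Pn; exists i0; apply: (subsetP Zsub); have [_ ? _ _] := HS i0; by rewrite Zi0.
  have [t tU Ut] := K4 _ UB Une.
  case/bigcupP: tU => Z1 Z1P tZ1.
  have [_ [i Z1i]] := NP Z1 (subsetP PN Z1 Z1P).
  have iU : i \in \bigcup_(X in P) X.
    by apply/bigcupP; exists Z1 => //; have [_ ? _ _] := HS i; rewrite Z1i.
  have ti : t = i by apply: uniq2; [rewrite -Z1i | apply: (subsetP Ut)].
  have [Z2 Z2P] : exists Z2, Z2 \in P :\ Z1.
    by apply/set0Pn; rewrite -card_gt0; move: P2; rewrite (cardsD1 Z1) Z1P; lia.
  move: Z2P; rewrite in_setD1 => /andP[Z21 Z2P].
  have [_ [j Z2j]] := NP Z2 (subsetP PN Z2 Z2P).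
  have jZ2 : j \in Z2 by have [_ ? _ _] := HS j; rewrite Z2j.
  have jZ1 : j \in Z1.
    rewrite Z1i -ti; apply: (subsetP Ut); apply/bigcupP; exists Z2 => //.
  have d : [disjoint Z1 & Z2] by apply: Pdis => //; rewrite eq_sym.
  by rewrite (disjointFr d jZ1) in jZ2.
have inS : forall i, i \in S i by move=> i; have [_ ? _ _] := HS i.
split; [|split].
  have [t _ Vt] := K4 _ BV Vne.
  have St : S t = [set: 'I_n] by apply/eqP; rewrite eqEsubset subsetT.
  by exists t; split => // j Sj; apply: uniq2; rewrite ?St ?Sj inE.
  by move=> i j Sij; apply: uniq2; rewrite ?Sij // -Sij.
split => // N' [N'sub [N'c N'2]] NN'.
apply/eqP; rewrite eqEsubset NN' andbT; apply/subsetP => X XN'.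
move: (subsetP N'sub X XN'); rewrite in_setD1 => /andP[XV XB].
have [Xne _] := Bne X XB.
have [t tX Xt] := K4 X XB Xne.
case: (eqVneq X (S t)) => [eX|ne].
  by apply/NP; split => //; exists t.
exfalso.
have /properP[_ [y0 y0S y0X]] : X \proper S t by rewrite properEneq ne Xt.
have below : forall y, y \in S t :\: X -> [/\ S y \subset S t, t \notin S y & S y \in N].
  move=> y /setDP[yS yX].
  have yt : y != t by apply: contraNneq yX => ->.
  have lt : l y < l t by case: (K3 y t yS) => // e; rewrite e eqxx in yt.
  have tn : t \notin S y.
    apply/negP => tS; case: (K3 t y tS) => [e|lt']; first by rewrite e ltnn in lt.
    by move: (ltn_trans lt lt'); rewrite ltnn.
  split => //; first exact: (K5 y t y (inS y) yS lt).
  apply/NP; split; last by exists y.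
  by apply: contraNneq tn => ->; rewrite inE.
pose mf := fun y => [arg max_(y' > y | (y' \in S t :\: X) && (y \in S y')) #|S y'|].
have mfP : forall y, y \in S t :\: X -> [/\ mf y \in S t :\: X, y \in S (mf y) &
    forall y', y' \in S t :\: X -> y \in S y' -> #|S y'| <= #|S (mf y)|].
  move=> y yD; rewrite /mf; case: arg_maxnP => [|z /andP[zD yz] zmax]; first by rewrite yD inS.
  by split => // y' y'D yy'; apply: zmax; rewrite y'D yy'.
have disjX : forall y, y \in S t :\: X -> [disjoint X & S (mf y)].
  move=> y yD; have [mD ymf _] := mfP y yD; have [_ tn mN] := below _ mD.
  case/or3P: (N'c X (S (mf y)) XN' (subsetP NN' _ mN)) => // H.
  - by rewrite (subsetP H t tX) in tn.
  - by move: mD; rewrite inE (subsetP H _ (inS _)).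
have disjM : forall y1 y2, y1 \in S t :\: X -> y2 \in S t :\: X ->
    S (mf y1) != S (mf y2) -> [disjoint S (mf y1) & S (mf y2)].
  move=> y1 y2 y1D y2D neq.
  have [m1D y1m _] := mfP y1 y1D; have [m2D y2m _] := mfP y2 y2D.
  case/or3P: (Ncomp (mf y1) (mf y2)) => // H.
  - have [_ _ c] := mfP y1 y1D; have := c _ m2D (subsetP H _ y1m) => le.
    by move: neq; rewrite eqEcard H le.
  - have [_ _ c] := mfP y2 y2D; have := c _ m1D (subsetP H _ y2m) => le.
    by move: neq; rewrite eq_sym eqEcard H le.
pose P := X |: [set S (mf y) | y in S t :\: X].
have y0D : y0 \in S t :\: X by rewrite inE y0X y0S.
have Pdis : forall A C, A \in P -> C \in P -> A != C -> [disjoint A & C].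
  move=> A C /setU1P[->|/imsetP[y1 y1D ->]] /setU1P[->|/imsetP[y2 y2D ->]] AC.
  - by rewrite eqxx in AC.
  - exact: disjX.
  - by rewrite disjoint_sym; apply: disjX.
  - exact: disjM.
have PN' : P \subset N'.
  apply/subsetP => Z /setU1P[->//|/imsetP[y yD ->]].
  by apply: (subsetP NN'); have [mD _ _] := mfP y yD; have [_ _ ?] := below _ mD.
have P2 : 1 < #|P|.
  have ne0 : X != S (mf y0).
    have [mD _ _] := mfP y0 y0D; have [_ tn _] := below _ mD.
    by apply: contraNneq tn => <-.
  apply: leq_trans (subset_leq_card (_ : [set X; S (mf y0)] \subset P)).
    by rewrite cards2 ne0.
  apply/subsetP => Z /set2P[->|->]; first exact: setU11.
  by apply: setU1r; apply/imsetP; exists y0.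
have Ueq : \bigcup_(Z in P) Z = S t.
  apply/eqP; rewrite eqEsubset; apply/andP; split.
    apply/bigcupsP => Z /setU1P[->//|/imsetP[y yD ->]].
    by have [mD _ _] := mfP y yD; have [? _ _] := below _ mD.
  apply/subsetP => x xS; case: (boolP (x \in X)) => xX.
    by apply/bigcupP; exists X => //; exact: setU11.
  have xD : x \in S t :\: X by rewrite inE xX xS.
  apply/bigcupP; exists (S (mf x)); last by have [] := mfP x xD.
  by apply: setU1r; apply/imsetP; exists x.
have := N'2 P PN' P2 Pdis; rewrite Ueq; have [SB _ _ _] := HS t; by rewrite SB.
Qed.
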